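(* Let $k=\mathbb F_{2^f}$ and let $\rho=(R,V,\beta,\Phi)$ be the form ring defined below. A code $C\le k^N$ is of Type $\rho$ if and only if $C$ is a generalized doubly-even self-dual code, i.e. $C$ is a $k$-linear subspace with $C=\{x\in k^N:\sum_i x_ic_i=0\ \forall c\in C\}$ and, for every $c\in C$, $\sum_{i=1}^N c_i=0$ and $\sum_{1\le i<j\le N}c_ic_j=0$.
   Context: $R=V=\mathbb F_{2^f}$ (so codes are $k$-linear subspaces of $k^N$). $\beta(x,y):=\tfrac12\mathrm{tr}(xy)\in\tfrac12\mathbb Z/\mathbb Z$, where $\mathrm{tr}$ is the trace $\mathbb F_{2^f}\to\mathbb F_2\cong\mathbb Z/2\mathbb Z$. Let $O=\mathbb Z_2[\zeta_{2^f-1}]$ be the ring of integers of the unramified extension of degree $f$ of $\mathbb Q_2$, so $R\cong O/2O$; for $x\in R$ the square $x^2$ of any lift of $x$ is well defined in $O/4O$, and the trace $\mathrm{Tr}:O\to\mathbb Z_2$ maps $4O$ into $4\mathbb Z_2$. For $a\in R$ let $\phi_a:V\to\tfrac14\mathbb Z/\mathbb Z$, $\phi_a(x):=\tfrac14\mathrm{Tr}(a^2x^2)$, and $\Phi=\{\phi_a:a\in R\}$. A code of Type $\rho$ is a subspace $C\le k^N$ that is self-dual, i.e. $C=\{x:\sum_i\beta(x_i,c_i)=0\ \forall c\in C\}$, and isotropic, i.e. $\sum_i\phi(c_i)=0$ in $\mathbb Q/\mathbb Z$ for all $c\in C$ and $\phi\in\Phi$. *)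

(* Defs.v *)
From HB Require Import structures.
From mathcomp Require Import all_boot all_order all_algebra.
Set Implicit Arguments. Unset Strict Implicit. Unset Printing Implicit Defensive.
Import Order.TTheory GRing.Theory Num.Theory.
Local Open Scope ring_scope.

(* Reduction of Z/4Z into a ring (of characteristic 2): z |-> (z mod 2). *)
Definition toR (R : nzRingType) (z : 'Z_4) : R := (val z)%:R.

Section FormRing.
Variables (f N : nat) (F : finFieldType).

(* absolute trace F_{2^f} -> F_2, with F_2 identified with the prime subfield {0,1} of F *)
Definition abs_tr (x : F) : F := \sum_(i < f) x ^+ (2 ^ i).

(* O/4O = GR(4,f) presented as (Z/4Z)[X]/(p), p a monic lift of an irreducible
   polynomial of degree f over F_2; alpha in F a root of p mod 2, so that
   F = F_2(alpha) = O/2O. *)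
Variables (p : {poly 'Z_4}) (alpha : F).

(* reduction O/4O -> O/2O = F *)
Definition proj (q : {poly 'Z_4}) : F := (map_poly (@toR F) q).[alpha].

(* Tr : O/4O -> Z/4Z, trace of multiplication by q in the basis 1, X, ..., X^(f-1) *)
Definition Tr4 (q : {poly 'Z_4}) : 'Z_4 :=
  \sum_(i < f) (Pdiv.Ring.rmodp (q * 'X^i) p)`_i.

(* beta-self-duality: C = {x : sum_i beta(x_i, c_i) = 0 for all c in C},
   beta(x,y) = 1/2 tr(xy) in 1/2 Z/Z, represented by tr(xy) in F_2 *)
Definition beta_self_dual (C : {vspace 'rV[F]_N}) : Prop :=
  forall x : 'rV[F]_N,
    x \in C <-> (forall c, c \in C -> \sum_(i < N) abs_tr (x 0 i * c 0 i) = 0).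

(* isotropy: sum_i phi_a(c_i) = 0 in Q/Z for all c in C, a in R, where
   phi_a(x) = 1/4 Tr(a^2 x^2) in 1/4 Z/Z, represented by Tr(a^2 x^2) in Z/4Z,
   computed with (arbitrary) lifts of a and of the x = c_i. *)
Definition phi_isotropic (C : {vspace 'rV[F]_N}) : Prop :=
  forall c, c \in C -> forall (a : F) (la : {poly 'Z_4}), proj la = a ->
    forall lc : 'I_N -> {poly 'Z_4}, (forall i, proj (lc i) = c 0 i) ->
      \sum_(i < N) Tr4 (la ^+ 2 * (lc i) ^+ 2) = 0.

Definition type_rho (C : {vspace 'rV[F]_N}) : Prop :=
  beta_self_dual C /\ phi_isotropic C.

End FormRing.

Definition gen_doubly_even_self_dual (N : nat) (F : finFieldType)
    (C : {vspace 'rV[F]_N}) : Prop :=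
  (forall x : 'rV[F]_N,
     x \in C <-> (forall c, c \in C -> \sum_(i < N) x 0 i * c 0 i = 0)) /\
  (forall c, c \in C ->
     \sum_(i < N) c 0 i = 0 /\
     \sum_(i < N) \sum_(j < N | (i < j)%N) c 0 i * c 0 j = 0).

(* Main.v *)
Require Import Defs.
From HB Require Import structures.
From mathcomp Require Import all_boot all_order all_algebra all_field zify ring.
Set Implicit Arguments. Unset Strict Implicit. Unset Printing Implicit Defensive.
Import Order.TTheory GRing.Theory Num.Theory.
Local Open Scope ring_scope.


Lemma uniq_interp (K : fieldType) (n : nat) (r : 'I_n -> K) (R : {poly K}) :
  injective r -> (size R <= n)%N -> (forall l, R.[r l] = 0) -> R = 0.
Proof.
move=> ri sR hR; apply/eqP; apply: contraT => R0.
have := @max_poly_roots _ R [seq r l | l <- enum 'I_n] R0.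
rewrite map_inj_uniq // enum_uniq size_map -cardE card_ord.
have -> : all (root R) [seq r l | l <- enum 'I_n].
  by apply/allP => x /mapP [l _ ->]; apply/rootP.
by move=> /(_ isT isT); rewrite ltnNge sR.
Qed.

Lemma trace_roots (K : fieldType) (n : nat) (Q : {poly K}) (r : 'I_n -> K) :
  Q \is monic -> size Q = n.+1 -> injective r -> (forall l, root Q (r l)) ->
  forall Y, \sum_(i < n) (Pdiv.Ring.rmodp (Y * 'X^i) Q)`_i = \sum_(l < n) Y.[r l].
Proof.
move=> Qm sQ ri rQ Y.
have Q0 : Q != 0 by rewrite monic_neq0.
pose L l := Q %/ ('X - (r l)%:P).
have eL l : L l * ('X - (r l)%:P) = Q by rewrite /L divpK // -root_factor_theorem.
have L0 l : L l != 0 by apply: contra Q0 => /eqP h; rewrite -(eL l) h mul0r.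
have sL l : size (L l) = n.
  have := congr1 (fun q : {poly K} => size q) (eL l); rewrite size_Mmonic ?monicXsubC // size_XsubC sQ.
  by rewrite addn2 /= => -[].
have Lm l m : l != m -> (L l).[r m] = 0.
  move=> lm; have := rQ m; rewrite -(eL l) rootE hornerM hornerXsubC mulf_eq0.
  by rewrite subr_eq0 (inj_eq ri) [m == l]eq_sym (negPf lm) orbF => /eqP.
have Ll l : (L l).[r l] != 0.
  apply: contra (L0 l) => /eqP h; apply/eqP; apply: (uniq_interp ri); first by rewrite sL.
  by move=> m; have [<-//|lm] := eqVneq l m; exact: Lm.
pose M l := ((L l).[r l])^-1 *: L l.
have sM l : (size (M l) <= n)%N by rewrite (leq_trans (size_scale_leq _ _)) // sL.
have Mm l m : (M l).[r m] = (l == m)%:R.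
  rewrite hornerZ; have [<-|lm] := eqVneq l m; first by rewrite mulVf.
  by rewrite (Lm l m lm) mulr0.
have interp (R : {poly K}) : (size R <= n)%N -> R = \sum_(l < n) R.[r l] *: M l.
  move=> sR; apply/eqP; rewrite -subr_eq0; apply/eqP/(uniq_interp ri).
    apply: leq_trans (size_polyD _ _) _; rewrite size_polyN geq_max sR /=.
    apply: (big_ind (fun q : {poly K} => size q <= n)%N) => //.
      by rewrite size_poly0.
      by move=> a b ha hb; apply: leq_trans (size_polyD _ _) _; rewrite geq_max ha.
    by move=> l _; rewrite (leq_trans (size_scale_leq _ _)).
  move=> m; rewrite hornerD hornerN horner_sum.
  rewrite (bigD1 m) //= big1 ?addr0; first by rewrite [X in _ - X]hornerZ Mm eqxx mulr1 subrr.
  by move=> l lm; rewrite [X in X = _]hornerZ Mm (negPf lm) mulr0.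
have Rev i l : (Pdiv.Ring.rmodp (Y * 'X^i) Q).[r l] = Y.[r l] * (r l) ^+ i.
  have := congr1 (horner^~ (r l)) (Pdiv.RingMonic.rdivp_eq Qm (Y * 'X^i)) => /=.
  by rewrite hornerD [X in _ = X + _]hornerM (rootP (rQ l)) mulr0 add0r hornerM hornerXn => <-.
have sR i : (size (Pdiv.Ring.rmodp (Y * 'X^i) Q) <= n)%N.
  by rewrite -ltnS -sQ Pdiv.Ring.ltn_rmodpN0.
transitivity (\sum_(i < n) \sum_(l < n) Y.[r l] * ((r l) ^+ i * (M l)`_i)).
  apply: eq_bigr => i _; rewrite {1}(interp _ (sR i)) coef_sum.
  by apply: eq_bigr => l _; rewrite coefZ Rev mulrA.
rewrite exchange_big; apply: eq_bigr => l _; rewrite -mulr_sumr.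
have := Mm l l; rewrite eqxx (horner_coef_wide _ (sM l)) /= => h.
rewrite (eq_bigr (fun i : 'I_n => (M l)`_i * r l ^+ i)); last by move=> i _; rewrite mulrC.
by rewrite h mulr1.
Qed.


Lemma sqr_sum (R : comNzRingType) n (x : 'I_n -> R) :
  (\sum_(i < n) x i) ^+ 2 =
  \sum_(i < n) x i ^+ 2 + (\sum_(i < n) \sum_(j < n | (i < j)%N) x i * x j) *+ 2.
Proof.
rewrite expr2 big_distrlr /=.
have split1 i : \sum_(j < n) x i * x j =
   x i ^+ 2 + \sum_(j < n | (i < j)%N) x i * x j + \sum_(j < n | (j < i)%N) x i * x j.
  rewrite (bigD1 i) //= -expr2 -addrA; congr (_ + _).
  rewrite (bigID (fun j : 'I_n => (i < j)%N)) /=; congr (_ + _); apply: eq_bigl => j.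
    by rewrite neq_ltn; case: (ltngtP i j).
  by rewrite neq_ltn; case: (ltngtP i j).
under eq_bigr do rewrite split1.
rewrite !big_split /= -addrA; congr (_ + _).
rewrite mulr2n; congr (_ + _).
under eq_bigr do rewrite big_mkcond; rewrite exchange_big /=.
apply: eq_bigr => i _; rewrite [RHS]big_mkcond; apply: eq_bigr => j _.
by case: ifP => //; rewrite mulrC.
Qed.

Section S.
Variables (f : nat) (F : finFieldType).
Hypothesis hF : #|F| = (2 ^ f)%N.

Lemma char2 : 2%N \in [pchar F].
Proof. exact: (card_finPcharP hF). Qed.

Lemma two0 : (2%:R : F) = 0.
Proof. exact: pcharf0 char2. Qed.

Lemma natr_mod4 n : ((n %% 4)%:R : F) = n%:R.
Proof.
rewrite {2}(divn_eq n 4) natrD natrM.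
have -> : (4%:R : F) = 0 by rewrite (natrM F 2 2) two0 mul0r.
by rewrite mulr0 add0r.
Qed.

Lemma natr_mod2 n : ((n %% 2)%:R : F) = n%:R.
Proof. by rewrite {2}(divn_eq n 2) natrD natrM two0 mulr0 add0r. Qed.

Lemma toRD (a b : 'Z_4) : toR F (a + b) = toR F a + toR F b.
Proof. by rewrite /toR /= natr_mod4 natrD. Qed.
Lemma toRM (a b : 'Z_4) : toR F (a * b) = toR F a * toR F b.
Proof. by rewrite /toR /= natr_mod4 natrM. Qed.
Lemma toR_zmod : zmod_morphism (@toR F).
Proof.
move=> a b; apply: (addIr (toR F b)); by rewrite -toRD subrK addrNK.
Qed.
Lemma toR_monoid : monoid_morphism (@toR F).
Proof. by split; [rewrite /toR /= | exact: toRM]. Qed.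
HB.instance Definition _ := GRing.isZmodMorphism.Build _ _ (@toR F) toR_zmod.
HB.instance Definition _ := GRing.isMonoidMorphism.Build _ _ (@toR F) toR_monoid.

Definition f2F (z : 'F_2) : F := (val z)%:R.
Lemma f2FD (a b : 'F_2) : f2F (a + b) = f2F a + f2F b.
Proof. by rewrite /f2F /= natr_mod2 natrD. Qed.
Lemma f2FM (a b : 'F_2) : f2F (a * b) = f2F a * f2F b.
Proof. by rewrite /f2F /= natr_mod2 natrM. Qed.
Lemma f2F_zmod : zmod_morphism f2F.
Proof.
move=> a b; apply: (addIr (f2F b)); by rewrite -f2FD subrK addrNK.
Qed.
Lemma f2F_monoid : monoid_morphism f2F.
Proof. by split; [rewrite /f2F /= | exact: f2FM]. Qed.
HB.instance Definition _ := GRing.isZmodMorphism.Build _ _ f2F f2F_zmod.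
HB.instance Definition _ := GRing.isMonoidMorphism.Build _ _ f2F f2F_monoid.


Definition fr k (x : F) := x ^+ (2 ^ k).

Lemma frD k x y : fr k (x + y) = fr k x + fr k y.
Proof.
rewrite /fr; elim: k => [|k IH]; first by rewrite expn0 !expr1.
by rewrite expnSr !exprM IH sqrrD (mulrn_pchar char2) addr0.
Qed.
Lemma fr0 k : fr k 0 = 0.
Proof. by rewrite /fr expr0n expn_eq0. Qed.
Lemma frM k x y : fr k (x * y) = fr k x * fr k y.
Proof. by rewrite /fr exprMn. Qed.
Lemma frX k x n : fr k (x ^+ n) = (fr k x) ^+ n.
Proof. by rewrite /fr exprAC. Qed.
Lemma fr_sum k I (r : seq I) (P : pred I) (G : I -> F) :
  fr k (\sum_(i <- r | P i) G i) = \sum_(i <- r | P i) fr k (G i).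
Proof. exact: (big_morph _ (frD k) (fr0 k)). Qed.
Lemma fr_nat k n : fr k (n%:R) = n%:R.
Proof.
rewrite -natr_mod2 /fr; have : (n %% 2 < 2)%N by rewrite ltn_mod.
case: (n %% 2)%N => [|[|//]] _; first by rewrite expr0n expn_eq0.
by rewrite expr1n.
Qed.
Lemma fr_toR k z : fr k (toR F z) = toR F z.
Proof. exact: fr_nat. Qed.

Lemma fr_horner k (q : {poly 'Z_4}) x :
  fr k ((map_poly (toR F) q).[x]) = (map_poly (toR F) q).[fr k x].
Proof.
rewrite !horner_coef fr_sum; apply: eq_bigr => i _.
by rewrite frM frX coef_map fr_toR.
Qed.

Lemma fr_add k l x : fr k (fr l x) = fr (l + k) x.
Proof. by rewrite /fr -exprM -expnD. Qed.

Lemma fr_card x : fr f x = x.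
Proof. by rewrite /fr -hF expf_card. Qed.

Variables (p : {poly 'Z_4}) (alpha : F).
Hypotheses (hp_monic : p \is monic) (hp_size : size p = f.+1)
  (hp_irr : irreducible_poly (map_poly (@toR 'F_2) p))
  (halpha : root (map_poly (@toR F) p) alpha).

Local Notation P := (map_poly (toR F) p).
Local Notation pb := (map_poly (@toR 'F_2) p).

Lemma size_P : size P = f.+1.
Proof.
rewrite size_map_poly_id0 ?hp_size //.
rewrite (_ : toR F _ = 1) ?oner_neq0 //; rewrite -(rmorph1 (toR F)); congr (toR F _); exact/monicP.
Qed.

Lemma monic_P : P \is monic.
Proof.
have h1 : lead_coef p = 1 by apply/monicP.
rewrite monicE lead_coef_map_id0 ?rmorph0 //.
  rewrite (_ : toR F _ = 1) //; rewrite -(rmorph1 (toR F)); congr (toR F _); exact/monicP.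
rewrite (_ : toR F _ = 1) ?oner_neq0 //; rewrite -(rmorph1 (toR F)); congr (toR F _); exact/monicP.
Qed.

Lemma size_pb : size pb = f.+1.
Proof.
rewrite size_map_poly_id0 ?hp_size //.
by rewrite (_ : lead_coef _ = 1) //; exact/monicP.
Qed.

Lemma f_gt0 : (0 < f)%N.
Proof. by have := hp_irr.1; rewrite size_pb. Qed.

Lemma map_pb : map_poly f2F pb = P.
Proof.
apply/polyP => i; rewrite coef_map /= !coef_map_id0 //.
rewrite /f2F /toR -[RHS]natr_mod2; congr (_%:R); exact: (@val_Fp_nat 2 isT).
Qed.

Lemma inj_alpha (d : {poly 'F_2}) :
  (size d <= f)%N -> (map_poly f2F d).[alpha] = 0 -> d = 0.
Proof.
move=> sd hd; have [//|dn0] := eqVneq d 0.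
have cop : coprimep d pb.
  have := dvdp_gcdr d pb; case/(irredp_XsubCP hp_irr) => [g1|gp].
    by rewrite -gcdp_eqp1.
  have : pb %| d by rewrite -(eqp_dvdl _ gp) dvdp_gcdl.
  move/(dvdp_leq dn0); rewrite size_pb => h.
  by have := leq_trans h sd; rewrite ltnn.
have := @coprimep_root _ (map_poly f2F pb) (map_poly f2F d) alpha.
rewrite coprimep_map coprimep_sym cop map_pb hd eqxx => /(_ isT halpha).
by [].
Qed.

Lemma lift_ex x : exists q : {poly 'Z_4}, proj alpha q = x.
Proof.
pose g (b : f.-tuple 'F_2) := (map_poly f2F (\poly_(i < f) b`_i)).[alpha].
have ginj : injective g.
  move=> b b' /eqP; rewrite -subr_eq0 /g -hornerN -hornerD -rmorphB => /eqP h.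
  have : \poly_(i < f) b`_i - \poly_(i < f) b'`_i = 0.
    apply: inj_alpha h.
    by apply: leq_trans (size_polyD _ _) _; rewrite size_polyN geq_max !size_poly.
  move/eqP; rewrite subr_eq0 => /eqP {}h; apply: val_inj.
  apply: (@eq_from_nth _ 0); first by rewrite !size_tuple.
  move=> i; rewrite size_tuple => hi.
  by move/polyP: h => /(_ i); rewrite !coef_poly hi.
have hc : (#|F| <= #|{: f.-tuple 'F_2}|)%N by rewrite card_tuple card_Fp // hF.
have /codomP [b ->] := inj_card_onto ginj hc x.
exists (\poly_(i < f) ((val b`_i)%:R : 'Z_4)).
rewrite /proj /g; congr horner; apply/polyP => i.
rewrite !coef_map !coef_poly; case: ifP => // _.
rewrite /= /toR /f2F -[RHS]natr_mod4; congr (_%:R); exact: (@val_Zp_nat 4 isT).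
Qed.

Lemma size_map_le (R S : nzRingType) (g : R -> S) (q : {poly R}) :
  (size (map_poly g q) <= size q)%N.
Proof. by rewrite map_polyE (leq_trans (size_Poly _)) // size_map. Qed.

Lemma map_f2F_toR (q : {poly 'Z_4}) :
  map_poly f2F (map_poly (@toR 'F_2) q) = map_poly (toR F) q.
Proof.
apply/polyP => i; rewrite coef_map /= !coef_map_id0 //.
rewrite /f2F /toR -[RHS]natr_mod2; congr (_%:R); exact: (@val_Fp_nat 2 isT).
Qed.

Lemma projD q1 q2 : proj alpha (q1 + q2) = proj alpha q1 + proj alpha q2.
Proof. by rewrite /proj rmorphD hornerD. Qed.
Lemma projM q1 q2 : proj alpha (q1 * q2) = proj alpha q1 * proj alpha q2.
Proof. by rewrite /proj rmorphM hornerM. Qed.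
Lemma projp : proj alpha p = 0.
Proof. exact/rootP. Qed.

Lemma half_coef (z : 'Z_4) : toR 'F_2 z = 0 -> z = ((val z)./2)%:R *+ 2.
Proof. by case: z => [[|[|[|[|n]]]] hz] //= h; apply: val_inj. Qed.

Lemma kernel (s : {poly 'Z_4}) :
  proj alpha s = 0 -> exists r t, s = r *+ 2 + t * p.
Proof.
move=> hs; have es := Pdiv.RingMonic.rdivp_eq hp_monic s.
set s' := Pdiv.Ring.rmodp s p in es.
have hs' : proj alpha s' = 0.
  by move: hs; rewrite {1}es projD projM projp mulr0 add0r.
have ss' : (size s' <= f)%N.
  by rewrite -ltnS -hp_size Pdiv.Ring.ltn_rmodpN0 // monic_neq0.
have d0 : map_poly (@toR 'F_2) s' = 0.
  apply: inj_alpha; first exact: leq_trans (size_map_le _ _) ss'.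
  by rewrite map_f2F_toR.
exists (\poly_(i < f) (((val s'`_i)./2)%:R : 'Z_4)), (Pdiv.Ring.rdivp s p).
rewrite addrC {1}es; congr (_ + _); apply/polyP => i.
rewrite coefMn coef_poly; case: ifP => hi.
  by apply: half_coef; move/polyP: d0 => /(_ i); rewrite coef_map_id0 // coef0.
rewrite nth_default ?mul0rn //; apply: leq_trans ss' _; by rewrite leqNgt hi.
Qed.

Lemma size_XnX n : (1 < n)%N -> size ('X^n - 'X : {poly F}) = n.+1.
Proof.
move=> hn; rewrite size_addl ?size_polyXn // size_polyN size_polyX //.
Qed.

Lemma fr_alpha_inj (i j : 'I_f) : fr i alpha = fr j alpha -> i = j.
Proof.
wlog lt : i j / (i <= j)%N.
  move=> H e; case: (leqP i j) => h; first exact: H.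
  by apply/esym/H => //; exact: ltnW.
move=> e; apply/val_inj/eqP; rewrite eqn_leq lt /= leqNgt; apply/negP => lij.
have hi := ltn_ord i; have hj := ltn_ord j.
set k := (j - i)%N.
have hk : alpha = fr k alpha.
  have e1 : fr (f - i) (fr i alpha) = alpha.
    by rewrite fr_add subnKC ?fr_card // ltnW.
  rewrite -{1}e1 e fr_add.
  have -> : (j + (f - i) = f + k)%N by rewrite /k; lia.
  by rewrite -fr_add fr_card.
have fixall x : fr k x = x.
  by have [q <-] := lift_ex x; rewrite /proj fr_horner -hk.
have k1 : (1 < 2 ^ k)%N.
  by rewrite -{1}(expn0 2) ltn_exp2l // /k; lia.
have := @max_poly_roots _ ('X^(2^k) - 'X) (enum F).
rewrite -cardE hF size_XnX // -size_poly_eq0 size_XnX // enum_uniq.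
have -> : all (root ('X^(2 ^ k) - 'X)) (enum F).
  by apply/allP => x _; rewrite rootE !hornerE -/(fr k x) fixall subrr.
move=> /(_ isT isT isT); rewrite ltnS leq_exp2l // leqNgt.
by rewrite /k; have -> : (j - i < f)%N by lia.
Qed.

Lemma map_rmodp (u : {poly 'Z_4}) :
  map_poly (toR F) (Pdiv.Ring.rmodp u p) = Pdiv.Ring.rmodp (map_poly (toR F) u) P.
Proof.
rewrite {2}(Pdiv.RingMonic.rdivp_eq hp_monic u) rmorphD rmorphM.
rewrite Pdiv.RingMonic.rmodp_addl_mul_small ?monic_P // size_P.
apply: leq_ltn_trans (size_map_le _ _) _.
by rewrite -hp_size Pdiv.Ring.ltn_rmodpN0 // monic_neq0.
Qed.

Lemma key (q : {poly 'Z_4}) : toR F (Tr4 f p q) = abs_tr f (proj alpha q).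
Proof.
rewrite /Tr4 rmorph_sum /=.
transitivity (\sum_(i < f) (Pdiv.Ring.rmodp (map_poly (toR F) q * 'X^i) P)`_i).
  apply: eq_bigr => i _; rewrite -coef_map map_rmodp rmorphM /= map_polyXn //.
rewrite (trace_roots monic_P size_P (@fr_alpha_inj)); last first.
  by move=> l; rewrite rootE -fr_horner (rootP halpha) fr0.
by rewrite /abs_tr; apply: eq_bigr => l _; rewrite -fr_horner.
Qed.

Lemma Tr4D a b : Tr4 f p (a + b) = Tr4 f p a + Tr4 f p b.
Proof.
rewrite /Tr4 -big_split; apply: eq_bigr => i _.
by rewrite mulrDl Pdiv.RingMonic.rmodpD // coefD.
Qed.
Lemma Tr40 : Tr4 f p 0 = 0.
Proof. by rewrite /Tr4 big1 // => i _; rewrite mul0r Pdiv.Ring.rmod0p coef0. Qed.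
Lemma Tr4N a : Tr4 f p (- a) = - Tr4 f p a.
Proof. by apply/eqP; rewrite -addr_eq0 -Tr4D addNr Tr40. Qed.
Lemma Tr4_sum I (r : seq I) (P0 : pred I) (G : I -> {poly 'Z_4}) :
  Tr4 f p (\sum_(i <- r | P0 i) G i) = \sum_(i <- r | P0 i) Tr4 f p (G i).
Proof. exact: (big_morph _ Tr4D Tr40). Qed.
Lemma Tr4_mulp u : Tr4 f p (u * p) = 0.
Proof.
by rewrite /Tr4 big1 // => i _; rewrite mulrAC Pdiv.RingMonic.rmodp_mull // coef0.
Qed.
Lemma Tr4Mn a : Tr4 f p (a *+ 2) = Tr4 f p a *+ 2.
Proof. by rewrite !mulr2n Tr4D. Qed.

Lemma abs_trD (x y : F) : abs_tr f (x + y) = abs_tr f x + abs_tr f y.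
Proof. by rewrite /abs_tr -big_split; apply: eq_bigr => i _; exact: frD. Qed.
Lemma abs_tr0 : abs_tr f (0 : F) = 0.
Proof. by rewrite /abs_tr big1 // => i _; exact: fr0. Qed.
Lemma abs_tr_sum I (r : seq I) (P0 : pred I) (G : I -> F) :
  abs_tr f (\sum_(i <- r | P0 i) G i) = \sum_(i <- r | P0 i) abs_tr f (G i).
Proof. exact: (big_morph _ abs_trD abs_tr0). Qed.

Lemma abs_tr_nondeg (y : F) : (forall l : F, abs_tr f (l * y) = 0) -> y = 0.
Proof.
move=> h; apply/eqP; apply: contraT => y0.
have hall (x : F) : abs_tr f x = 0 by rewrite -(divfK y0 x) h.
pose T : {poly F} := \sum_(i < f) 'X^(2 ^ i).
have sT : (size T <= (2 ^ f.-1).+1)%N.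
  apply: (big_ind (fun q : {poly F} => size q <= (2 ^ f.-1).+1)%N) => //.
  - by rewrite size_poly0.
  - by move=> a b ha hb; apply: leq_trans (size_polyD _ _) _; rewrite geq_max ha.
  move=> i _; rewrite size_polyXn ltnS leq_exp2l //.
  by have := ltn_ord i; have := f_gt0; lia.
have T0 : T != 0.
  have fp : (f.-1 < f)%N by rewrite prednK ?f_gt0.
  apply/eqP => /(congr1 (fun q : {poly F} => q`_(2 ^ f.-1))).
  rewrite coef_sum (bigD1 (Ordinal fp)) //= coefXn eqxx big1 ?addr0 ?coef0.
    exact/eqP/oner_neq0.
  move=> i /eqP hi; rewrite coefXn eqn_exp2l //; case: eqP => // e.
  by case: hi; apply: val_inj; rewrite /= e.
have := @max_poly_roots _ T (enum F) T0.
have -> : all (root T) (enum F).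
  apply/allP => x _; rewrite rootE horner_sum.
  apply/eqP; transitivity (abs_tr f x); last exact: hall.
  by rewrite /abs_tr; apply: eq_bigr => i _; rewrite hornerXn.
rewrite enum_uniq -cardE hF => /(_ isT isT) => h2.
have := leq_trans h2 sT; rewrite ltnS.
have ef : (2 ^ f = 2 ^ f.-1 * 2)%N by rewrite -expnSr prednK // f_gt0.
rewrite ef; have := expn_gt0 2 f.-1; lia.
Qed.

Lemma z4 (z : 'Z_4) : (z *+ 2 = 0) <-> (toR F z = 0).
Proof.
case: z => [[|[|[|[|n]]]] hz] //=; rewrite /toR /=; split => // h; try (by apply: val_inj).
- by move: h => /eqP; rewrite oner_eq0.
- exact: two0.
- by move: h; rewrite (natrD F 1 2) two0 addr0 => /eqP; rewrite oner_eq0.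
Qed.

Lemma mul4 (q : {poly 'Z_4}) : q *+ 4 = 0.
Proof.
by rewrite -mulr_natr (_ : 4%:R = 0 :> {poly 'Z_4}) ?mulr0 // -polyC_natr; apply/eqP; rewrite polyC_eq0.
Qed.

Lemma iso n (la : {poly 'Z_4}) (lc : 'I_n -> {poly 'Z_4}) :
  proj alpha (\sum_(i < n) lc i) = 0 ->
  \sum_(i < n) Tr4 f p (la ^+ 2 * (lc i) ^+ 2) =
  Tr4 f p (la ^+ 2 * \sum_(i < n) \sum_(j < n | (i < j)%N) lc i * lc j) *+ 2.
Proof.
move=> /kernel [r [t es]].
set s := \sum_(i < n) lc i in es; set E := \sum_(i < n) \sum_(j < n | (i < j)%N) lc i * lc j.
rewrite -Tr4_sum -mulr_sumr.
have -> : \sum_(i < n) lc i ^+ 2 = s ^+ 2 - E *+ 2 by rewrite sqr_sum addrK.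
have -> : s ^+ 2 = (t ^+ 2 * p) * p + (r ^+ 2 + r * t * p) *+ 4 by rewrite es; ring.
rewrite mul4 addr0 mulrBr mulrnAr Tr4D Tr4N Tr4Mn mulrA Tr4_mulp add0r.
set w := Tr4 f p _; apply: (addIr (w *+ 2)); rewrite addNr -mulrnDr.
rewrite -mulr_natr; have -> : (2 + 2)%:R = 0 :> 'Z_4 by apply: val_inj.
by rewrite mulr0.
Qed.

Lemma proj0 : proj alpha 0 = 0.
Proof. by rewrite /proj rmorph0 horner0. Qed.
Lemma proj_sum I (r : seq I) (P0 : pred I) (G : I -> {poly 'Z_4}) :
  proj alpha (\sum_(i <- r | P0 i) G i) = \sum_(i <- r | P0 i) proj alpha (G i).
Proof. exact: (big_morph _ projD proj0). Qed.

Lemma main_sec (N : nat) (C : {vspace 'rV[F]_N}) :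
  type_rho f p alpha C <-> gen_doubly_even_self_dual C.
Proof.
have ortho (x : 'rV[F]_N) :
   (forall c, c \in C -> \sum_(i < N) abs_tr f (x 0 i * c 0 i) = 0) <->
   (forall c, c \in C -> \sum_(i < N) x 0 i * c 0 i = 0).
  split => h c cC.
    apply: abs_tr_nondeg => l; rewrite -[RHS](h (l *: c) (memvZ l cC)).
    rewrite -abs_tr_sum mulr_sumr; congr (abs_tr f _); apply: eq_bigr => i _.
    by rewrite mxE mulrCA.
  by rewrite -abs_tr_sum (h c cC) abs_tr0.
have sdE : beta_self_dual f C <->
    (forall x : 'rV[F]_N, x \in C <-> (forall c, c \in C -> \sum_(i < N) x 0 i * c 0 i = 0)).
  split => H x; [exact: iff_trans (H x) (ortho x) | exact: iff_trans (H x) (iff_sym (ortho x))].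
have projE (la : {poly 'Z_4}) (lc : 'I_N -> {poly 'Z_4}) a (c : 'rV[F]_N) :
    proj alpha la = a -> (forall i, proj alpha (lc i) = c 0 i) ->
    proj alpha (la ^+ 2 * \sum_(i < N) \sum_(j < N | (i < j)%N) lc i * lc j) =
    a ^+ 2 * \sum_(i < N) \sum_(j < N | (i < j)%N) c 0 i * c 0 j.
  move=> ha hc; rewrite projM [la ^+ 2]expr2 projM ha -expr2.
  congr (_ * _); rewrite proj_sum; apply: eq_bigr => i _.
  by rewrite proj_sum; apply: eq_bigr => j _; rewrite projM !hc.
split.
  case=> /sdE SD ISO; split => // c cC.
  have cc : \sum_(i < N) c 0 i * c 0 i = 0 by have /SD := cC; apply.
  have s0 : \sum_(i < N) c 0 i = 0.
    have : fr 1 (\sum_(i < N) c 0 i) = 0.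
      rewrite fr_sum -[RHS]cc; apply: eq_bigr => i _; by rewrite /fr expn1 expr2.
    by rewrite /fr expn1 => /eqP; rewrite expf_eq0 => /andP [_ /eqP].
  split => //; apply: abs_tr_nondeg => l.
  pose a := fr f.-1 l.
  have a2 : a ^+ 2 = l by rewrite /a -/(fr 1 _) fr_add addn1 prednK ?f_gt0 // fr_card.
  have [la ha] := lift_ex a.
  have ex i : exists q : {poly 'Z_4}, proj alpha q == c 0 i.
    by have [q hq] := lift_ex (c 0 i); exists q; apply/eqP.
  pose lc i := xchoose (ex i).
  have hc i : proj alpha (lc i) = c 0 i by apply/eqP; exact: xchooseP (ex i).
  have := ISO c cC a la ha lc hc; rewrite iso; last first.
    by rewrite proj_sum -[RHS]s0; apply: eq_bigr => i _; exact: hc.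
  by move/z4; rewrite key (projE _ _ _ c ha hc) a2.
case=> SD GEN; split; first exact/sdE.
move=> c cC a la ha lc hc; rewrite iso; last first.
  by rewrite proj_sum -[RHS](GEN c cC).1; apply: eq_bigr => i _; exact: hc.
by apply/z4; rewrite key (projE _ _ _ c ha hc) (GEN c cC).2 mulr0 abs_tr0.
Qed.
End S.

Theorem mainTheorem4 (f N : nat) (F : finFieldType) (hF : #|F| = (2 ^ f)%N)
  (p : {poly 'Z_4}) (hp_monic : p \is monic) (hp_size : size p = f.+1)
  (hp_irr : irreducible_poly (map_poly (@toR 'F_2) p))
  (alpha : F) (halpha : root (map_poly (@toR F) p) alpha)
  (C : {vspace 'rV[F]_N}) :
  @type_rho f N F p alpha C <-> gen_doubly_even_self_dual C.
Proof. exact: (main_sec hF hp_monic hp_size hp_irr halpha C). Qed.
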